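(* Let $n\ge 2$ and $q\ge 0$ be real. Let $A\in M_n(\mathbb{C})$ be normal and $B\in M_n(\mathbb{C})$ arbitrary. Then $$\|AB-qBA\|_F^2\le (1+q^2)\,\|A\|_{(2),2}^2\,\|B\|_F^2 .$$ The bound is sharp: equality holds for $A=\operatorname{diag}(1,-q,0,\dots,0)$ and $B$ the matrix whose only nonzero entry is $b_{12}=1$.
   Context: $\|X\|_F=\sqrt{\operatorname{tr}(XX^\dagger)}$ is the Frobenius norm. For $X\in M_n(\mathbb{C})$ with singular values $s_1\ge s_2\ge\cdots\ge s_n$, the Ky Fan $(2),2$ norm is $\|X\|_{(2),2}=\sqrt{s_1^2+s_2^2}$. *)

(* Defs.v *)
(* Complex numbers: an arbitrary numClosedFieldType C
   (e.g. algC or complex R for R : rcfType). *)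
From HB Require Import structures.
From mathcomp Require Import all_boot all_order all_algebra.
From mathcomp Require Import sesquilinear spectral.
Set Implicit Arguments. Unset Strict Implicit. Unset Printing Implicit Defensive.
Import Order.TTheory GRing.Theory Num.Theory.
Local Open Scope ring_scope.
Local Open Scope sesquilinear_scope.

Section Norms.
Context {C : numClosedFieldType} {n : nat}.

Definition frob (X : 'M[C]_n) : C := sqrtC (\tr (X *m X ^t*)).

Definition gram_eigs (X : 'M[C]_n) : seq C :=
  sort (fun x y : C => y <= x)
    (projT1 (closed_field_poly_normal (char_poly (X *m X ^t*)))).

Definition svals (X : 'M[C]_n) : seq C := map sqrtC (gram_eigs X).

Definition kyfan22 (X : 'M[C]_n) : C :=
  sqrtC ((svals X)`_0 ^+ 2 + (svals X)`_1 ^+ 2).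

End Norms.

Definition Aext {C : numClosedFieldType} (n : nat) (q : C) : 'M[C]_n :=
  \matrix_(i, j) (if i == j then
                    (if val i == 0%N then 1 else if val i == 1%N then - q else 0)
                  else 0).

Definition Bext {C : numClosedFieldType} (n : nat) : 'M[C]_n :=
  \matrix_(i, j) ((val i == 0%N) && (val j == 1%N))%:R.

(* Main.v *)
Require Import Defs.
From HB Require Import structures.
From mathcomp Require Import all_boot all_order all_algebra.
From mathcomp Require Import sesquilinear spectral.
From mathcomp Require Import ring.
Import Order.TTheory GRing.Theory Num.Theory.
Local Open Scope ring_scope.

Lemma count_enum_card n (P : pred 'I_n) : count P (enum 'I_n) = #|P|.
Proof.
rewrite cardE /enum_mem size_filter count_filter; apply: eq_count => x.
by rewrite /= andbT.
Qed.

Lemma top2 (C : numDomainType) (g : seq C) m (e : 'I_m -> C) (i j : 'I_m) :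
  sorted (fun x y => y <= x) g -> perm_eq g (map e (enum 'I_m)) ->
  i != j -> e j <= e i -> e i + e j <= g`_0 + g`_1.
Proof.
move=> sg pg ij eji.
have tr : transitive (fun x y : C => y <= x).
  by move=> y x z xy yz; exact: le_trans yz xy.
have c2 : (2 <= count (fun x : C => (e j <= x)%R) g)%N.
  rewrite (permP pg) count_map count_enum_card.
  have -> : 2%N = #|[set i; j]| by rewrite cards2 ij.
  apply: subset_leq_card; apply/subsetP => k; rewrite !inE.
  by case/orP => /eqP ->; rewrite ?eji ?lexx.
have ig : e i \in g by rewrite (perm_mem pg) map_f ?mem_enum.
case: g sg pg c2 ig => [|x0 [|x1 s]] sg pg c2 ig //=.
  by move: c2; rewrite /= addn0; case: (e j <= x0).
have /allP a0 := order_path_min tr sg.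
move: sg => /= /andP[_ sg1].
have /allP a1 := order_path_min tr sg1.
apply: lerD.
  move: ig; rewrite in_cons => /orP[/eqP -> //|]; exact: a0.
case ex1: (e j <= x1) => //.
move: c2 => /=; rewrite ex1 add0n.
have -> : count (fun x : C => (e j <= x)%R) s = 0%N.
  rewrite -(count_pred0 s); apply: eq_in_count => y ys /=.
  apply/negbTE/negP => ejy; move/negbT: ex1 => /negP; apply.
  exact: le_trans ejy (a1 y ys).
by rewrite addn0; case: (e j <= x0).
Qed.

Lemma char_poly_sim (R : comNzRingType) n (P Q E : 'M[R]_n) :
  Q *m P = 1%:M -> char_poly (Q *m E *m P) = char_poly E.
Proof.
move=> QP.
rewrite /char_poly /char_poly_mx.
have -> : 'X%:M - map_mx polyC (Q *m E *m P) =
   map_mx polyC Q *m ('X%:M - map_mx polyC E) *m map_mx polyC P.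
  rewrite mulmxBr mulmxBl -!map_mxM mul_mx_scalar -scalemxAl -map_mxM QP.
  by rewrite map_mx1 scalemx1.
by rewrite !det_mulmx mulrAC -det_mulmx -map_mxM QP map_mx1 det1 mul1r.
Qed.

Section S.
Variable C : numClosedFieldType.
Local Open Scope sesquilinear_scope.

Lemma frob2E n (X : 'M[C]_n) :
  frob X ^+ 2 = \sum_i \sum_j `|X i j| ^+ 2.
Proof.
rewrite /frob sqrtCK /mxtrace; apply: eq_bigr => i _.
rewrite !mxE; apply: eq_bigr => j _; by rewrite !mxE normCK.
Qed.

Lemma frob_unitary n (P Y : 'M[C]_n) : P \is unitarymx ->
  frob (P^t* *m Y *m P) = frob Y.
Proof.
move=> /unitarymxP PP.
rewrite /frob; congr sqrtC.
rewrite !trmx_mul !map_mxM trmxCK.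
have PU : P \is unitarymx by apply/unitarymxP.
rewrite !mulmxA mulmxtVK // mxtrace_mulC !mulmxA PP mul1mx.
done.
Qed.

Lemma gram_eigsE n (P : 'M[C]_n) d : P \is unitarymx ->
  perm_eq (gram_eigs (P^t* *m diag_mx d *m P))
          (map (fun i => `|d 0 i| ^+ 2) (enum 'I_n)).
Proof.
move=> PU.
have PP : P^t* *m P = 1%:M by rewrite -[P^t*]mul1mx mulmxKtV.
rewrite /gram_eigs; case: closed_field_poly_normal => r /= Hr.
rewrite perm_sort; apply: prod_XsubC_eq.
rewrite big_map big_enum /=.
move: Hr; rewrite (monicP (char_poly_monic _)) scale1r => <-.
rewrite !trmx_mul !map_mxM trmxCK tr_diag_mx map_diag_mx.
have -> : P^t* *m diag_mx d *m P *m (P^t* *m (diag_mx (map_mx Num.conj d) *m P)) =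
   P^t* *m (diag_mx d *m diag_mx (map_mx Num.conj d)) *m P.
  by rewrite !mulmxA mulmxtVK // -!mulmxA.
rewrite char_poly_sim // char_poly_trig; last first.
  apply/is_trig_mxP => a b ab; rewrite mul_diag_mx !mxE.
  rewrite (_ : (a == b) = false) ?mulr0n ?mulr0 //.
  by apply/negbTE; rewrite neq_ltn ab.
apply: eq_big => // i _; by rewrite mul_diag_mx !mxE eqxx mulr1n normCK.
Qed.

Lemma sq_le (a b : C) : 0 <= a -> a <= b -> a ^+ 2 <= b ^+ 2.
Proof. by move=> a0 ab; rewrite !expr2 ler_pM. Qed.

Lemma scal1 (q x y : C) : 0 <= q ->
  `|x - q * y| ^+ 2 <= (1 + q ^+ 2) * (`|x| ^+ 2 + `|y| ^+ 2).
Proof.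
move=> q0.
apply: le_trans (_ : (`|x| + q * `|y|) ^+ 2 <= _).
  apply: sq_le => //; apply: le_trans (ler_normB _ _) _.
  by rewrite normrM (ger0_norm q0).
rewrite -subr_ge0.
have -> : (1 + q ^+ 2) * (`|x| ^+ 2 + `|y| ^+ 2) - (`|x| + q * `|y|) ^+ 2
   = (q * `|x| - `|y|) ^+ 2 by ring.
by rewrite -realEsqr realB // realM // ger0_real.
Qed.

Lemma scal2 (q x : C) : 0 <= q ->
  `|x - q * x| ^+ 2 <= (1 + q ^+ 2) * `|x| ^+ 2.
Proof.
move=> q0.
have -> : x - q * x = (1 - q) * x by ring.
rewrite normrM exprMn real_normK ?realB ?ger0_real //.
apply: ler_wpM2r; first by rewrite exprn_ge0.
rewrite -subr_ge0.
have -> : 1 + q ^+ 2 - (1 - q) ^+ 2 = q *+ 2 by ring.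
by rewrite mulrn_wge0.
Qed.

Lemma comm_entry n (d : 'rV[C]_n) (Y : 'M[C]_n) (q : C) i j :
  (diag_mx d *m Y - q *: (Y *m diag_mx d)) i j = (d 0 i - q * d 0 j) * Y i j.
Proof. rewrite mul_diag_mx mul_mx_diag !mxE; ring. Qed.

Lemma gram_info n (P : 'M[C]_n) d : P \is unitarymx ->
  let g := gram_eigs (P^t* *m diag_mx d *m P) in
  [/\ size g = n, sorted (fun x y => y <= x) g,
      perm_eq g (map (fun i => `|d 0 i| ^+ 2) (enum 'I_n)) &
      forall x, x \in g -> 0 <= x].
Proof.
move=> PU g; have pg := @gram_eigsE n P d PU.
have nn : forall x, x \in g -> 0 <= x.
  by move=> x; rewrite (perm_mem pg) => /mapP [i _ ->]; rewrite exprn_ge0.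
split => //; first by rewrite (perm_size pg) size_map size_enum_ord.
rewrite /g /gram_eigs; apply: (sort_sorted_in (P := Num.real)).
  move=> x y xr yr; rewrite /total /=; by case/orP: (real_leVge xr yr) => ->; rewrite ?orbT.
apply/allP => x xr; apply: ger0_real; apply: nn.
by rewrite /g /gram_eigs mem_sort.
Qed.

Lemma kyfanE n (X : 'M[C]_n) : (1 < size (gram_eigs X))%N ->
  kyfan22 X ^+ 2 = (gram_eigs X)`_0 + (gram_eigs X)`_1.
Proof.
move=> s2; rewrite /kyfan22 sqrtCK /svals.
by rewrite !(nth_map 0) ?sqrtCK // (ltn_trans _ s2).
Qed.

Lemma top2' (g : seq C) m (e : 'I_m -> C) (i j : 'I_m) :
  sorted (fun x y => y <= x) g -> perm_eq g (map e (enum 'I_m)) ->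
  (forall k, 0 <= e k) ->
  i != j -> e i + e j <= g`_0 + g`_1.
Proof.
move=> sg pg e0 ij.
case/orP: (real_leVge (ger0_real (e0 i)) (ger0_real (e0 j))) => h.
  by rewrite addrC; apply: top2 => //; rewrite eq_sym.
exact: top2.
Qed.

Lemma sum1 n (F : 'I_n -> C) i0 :
  (forall k, k != i0 -> F k = 0) -> \sum_k F k = F i0.
Proof.
move=> h; rewrite (bigD1 i0) //= big1 ?addr0 // => k /h //.
Qed.

Lemma sum2 n (F : 'I_n -> C) i0 j0 : i0 != j0 ->
  (forall k, k != i0 -> k != j0 -> F k = 0) -> \sum_k F k = F i0 + F j0.
Proof.
move=> ij h; rewrite (bigD1 i0) //= (bigD1 j0) 1?eq_sym //= big1 ?addr0 //.
by move=> k /andP[ki kj]; apply: h.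
Qed.


End S.

Theorem proposition1 (C : numClosedFieldType) (n : nat) (hn : (2 <= n)%N)
  (q : C) (hq : 0 <= q) :
  (forall A B : 'M[C]_n, A \is normalmx ->
     frob (A *m B - q *: (B *m A)) ^+ 2
       <= (1 + q ^+ 2) * kyfan22 A ^+ 2 * frob B ^+ 2) /\
  frob ((Aext n q) *m (Bext n) - q *: ((Bext n) *m (Aext n q))) ^+ 2
    = (1 + q ^+ 2) * kyfan22 (Aext n q) ^+ 2 * frob (Bext n) ^+ 2.
Proof.
have n0 : (0 < n)%N by apply: ltn_trans hn.
pose i0 : 'I_n := Ordinal n0.
pose i1 : 'I_n := Ordinal hn.
have i01 : i0 != i1 by [].
split.
  move=> A B /orthomx_spectralP.
  set P := spectralmx A; set d := spectral_diag A => AE.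
  have PU : P \is unitarymx by apply: spectral_unitarymx.
  rewrite invmx_unitary // in AE.
  have PP : (P^t*)%sesqui *m P = 1%:M by rewrite -[(P^t*)%sesqui]mul1mx mulmxKtV.
  set Y := P *m B *m (P^t*)%sesqui.
  have BE : B = (P^t*)%sesqui *m Y *m P.
    by rewrite /Y !mulmxA PP mul1mx mulmxKtV.
  have ME : A *m B - q *: (B *m A) =
      (P^t*)%sesqui *m (diag_mx d *m Y - q *: (Y *m diag_mx d)) *m P.
    rewrite mulmxBr mulmxBl -scalemxAr -scalemxAl.
    congr (_ - _ *: _).
      by rewrite AE {1}BE !mulmxA mulmxtVK.
    by rewrite AE {1}BE !mulmxA mulmxtVK.
  have FB : frob B = frob Y by rewrite {1}BE frob_unitary.
  rewrite ME frob_unitary // FB.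
  have [sz sg pg nn] := @gram_info C n P d PU.
  rewrite -AE in sz sg pg nn.
  set g := gram_eigs A in sz sg pg nn.
  rewrite kyfanE; last by rewrite sz.
  set K := g`_0 + g`_1.
  have e0 : forall k : 'I_n, 0 <= `|d 0 k| ^+ 2 by move=> k; rewrite exprn_ge0.
  have Kij : forall i j : 'I_n, i != j -> `|d 0 i| ^+ 2 + `|d 0 j| ^+ 2 <= K.
    by move=> i j ij; apply: (@top2' C g n (fun k => `|d 0 k| ^+ 2)).
  have Kb : forall i j : 'I_n, `|d 0 i - q * d 0 j| ^+ 2 <= (1 + q ^+ 2) * K.
    move=> i j; case: (eqVneq i j) => [<-|ij].
      apply: le_trans (@scal2 C q _ hq) _; apply: ler_wpM2l.
        by rewrite addr_ge0 ?exprn_ge0.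
      pose j' := if i == i0 then i1 else i0.
      have ij : i != j'.
        rewrite /j'; case: (eqVneq i i0) => [->|h]; last by rewrite (negbTE h).
        by [].
      apply: le_trans (Kij _ _ ij); by rewrite lerDl.
    apply: le_trans (@scal1 C q _ _ hq) _; apply: ler_wpM2l.
      by rewrite addr_ge0 ?exprn_ge0.
    exact: Kij.
  rewrite !frob2E mulr_sumr; apply: ler_sum => i _.
  rewrite mulr_sumr; apply: ler_sum => j _.
  rewrite comm_entry normrM exprMn; apply: ler_wpM2r; first by rewrite exprn_ge0.
  exact: Kb.
pose a : 'rV[C]_n := \row_i (if val i == 0%N then 1 else if val i == 1%N then - q else 0).
have AD : Aext n q = diag_mx a.
  apply/matrixP => i j; rewrite !mxE.
  by case: (i == j); rewrite ?mulr1n ?mulr0n.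
have PU1 : (1%:M : 'M[C]_n) \is unitarymx.
  by apply/unitarymxP; rewrite trmx1 map_mx1 mulmx1.
have [sz sg pg nn] := @gram_info C n 1%:M a PU1.
have AE : ((1%:M)^t*)%sesqui *m diag_mx a *m 1%:M = Aext n q.
  by rewrite trmx1 map_mx1 mulmx1 mul1mx AD.
rewrite AE in sz sg pg nn.
set g := gram_eigs (Aext n q) in sz sg pg nn.
rewrite kyfanE; last by rewrite sz.
have v0 : forall k : 'I_n, k != i0 -> (val k == 0%N) = false.
  by move=> k /negbTE.
have v1 : forall k : 'I_n, k != i1 -> (val k == 1%N) = false.
  by move=> k /negbTE.
have Se : \sum_k `|a 0 k| ^+ 2 = 1 + q ^+ 2.
  rewrite (@sum2 C n _ i0 i1) // => [|k k0 k1]; rewrite !mxE /=.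
    by rewrite normr1 expr1n normrN ger0_norm.
  by rewrite v0 // v1 // normr0 expr0n.
have KE : g`_0 + g`_1 = 1 + q ^+ 2.
  apply/le_anti/andP; split; last first.
    rewrite -Se; have := @top2' C g n (fun k => `|a 0 k| ^+ 2) i0 i1 sg pg.
    rewrite (@sum2 C n _ i0 i1) //; last first.
      by move=> k k0 k1; rewrite !mxE /= v0 // v1 // normr0 expr0n.
    apply => //; move=> k; exact: exprn_ge0.
  rewrite -Se.
  have -> : \sum_k `|a 0 k| ^+ 2 = \sum_(x <- g) x.
    rewrite (perm_big _ pg) big_map big_enum /=; apply: eq_big => //.
  move: nn; case: (g) => [|x0 [|x1 s]] nn /=.
  - by rewrite big_nil addr0.
  - by rewrite big_seq1 addr0.
  rewrite !big_cons addrA lerDl big_seq; apply: sumr_ge0 => x xs; apply: nn.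
  by rewrite !in_cons xs !orbT.
rewrite KE !frob2E AD.
rewrite (@sum1 C n _ i0) => [|k k0]; last first.
  by apply: big1 => j _; rewrite comm_entry !mxE v0 // mulr0 normr0 expr0n.
rewrite (@sum1 C n _ i1) => [|k k1]; last first.
  by rewrite comm_entry !mxE /= v1 // mulr0 normr0 expr0n.
rewrite (@sum1 C n (fun i => \sum_j `|Bext n i j| ^+ 2) i0) => [|k k0]; last first.
  by apply: big1 => j _; rewrite !mxE v0 // normr0 expr0n.
rewrite (@sum1 C n _ i1) => [|k k1]; last first.
  by rewrite !mxE /= v1 // normr0 expr0n.
rewrite comm_entry !mxE /= normr1 expr1n mulr1 mulr1.
rewrite ger0_norm; first by ring.
by rewrite mulrN opprK addr_ge0 ?exprn_ge0 // -expr2 exprn_ge0.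
Qed.
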